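(* Let $\|w\|_{L^\infty(\Omega)}\le\bar c_0\le\bar v/\sqrt5$, $\|w_x\|_{L^\infty(\Omega)}\le\bar c_1$, $\|w_{xx}\|_{L^\infty(\Omega)}\le\bar c_2$, and $\underline v^2:=\bar v^2-\bar c_0^2$. Then for any $\xi\in X$ and directions $\delta\xi,\widetilde{\delta\xi}\in\delta X$, the second directional derivative of $f$ satisfies (pointwise in $\tau$) $$|f''(\xi,\xi_\tau)[\delta\xi,\delta\xi_\tau][\widetilde{\delta\xi},\widetilde{\delta\xi}_\tau]|\le\bar\beta_0\|\xi_\tau\|\|\delta\xi\|\|\widetilde{\delta\xi}\|+\bar\beta_1\big(\|\delta\xi\|\|\widetilde{\delta\xi}_\tau\|+\|\delta\xi_\tau\|\|\widetilde{\delta\xi}\|\big)+\bar\beta_2\|\xi_\tau\|^{-1}\|\delta\xi_\tau\|\|\widetilde{\delta\xi}_\tau\|$$ with $\bar\beta_0=14\frac{\bar c_1^2}{\underline v^3}+4\frac{\bar c_2}{\underline v^2}$, $\bar\beta_1=7\frac{\bar c_1}{\underline v^2}$, $\bar\beta_2=\frac{4}{\underline v}$.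
   Context: Fix $\bar v>0$, $x_O\ne x_D\in\mathbb R^2$, and $w\in C^3(\mathbb R^2,\mathbb R^2)$ with $\|w(x)\|<\bar v$; $w_x,w_{xx}$ are its derivatives in operator norm; $\Omega\subset\mathbb R^2$ is an ellipse with foci $x_O,x_D$ containing every globally optimal trajectory, and $\|g\|_{L^\infty(\Omega)}$ is the essential supremum of the pointwise norm over $\Omega$. $f(x,p)=\frac{-p^Tw(x)+\sqrt{(p^Tw(x))^2+(\bar v^2-w(x)^Tw(x))p^Tp}}{\bar v^2-w(x)^Tw(x)}$; $f''(\xi,\xi_\tau)[\cdot][\cdot]$ is the second derivative of $f$ w.r.t. $(x,p)$ at $(\xi(\tau),\xi_\tau(\tau))$ applied to the directions $(\delta\xi(\tau),\delta\xi_\tau(\tau))$ and $(\widetilde{\delta\xi}(\tau),\widetilde{\delta\xi}_\tau(\tau))$. $X=\{\xi\in W^{1,\infty}(]0,1[,\mathbb R^2):\xi(0)=x_O,\xi(1)=x_D\}$, $\delta X=W_0^{1,\infty}(]0,1[,\mathbb R^2)$, subscript $\tau$ = derivative; $\|\cdot\|$ Euclidean norm. *)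

(* Defs.v *)
From Stdlib Require Import Reals.
From Coquelicot Require Import Coquelicot.
Open Scope R_scope.

Definition vec := (R * R)%type.
Definition vadd (a b : vec) : vec := (fst a + fst b, snd a + snd b).
Definition vsub (a b : vec) : vec := (fst a - fst b, snd a - snd b).
Definition vscal (s : R) (a : vec) : vec := (s * fst a, s * snd a).
Definition dot (a b : vec) : R := fst a * fst b + snd a * snd b.
Definition vnorm (a : vec) : R := sqrt (dot a a).

Definition pd1 (g : R -> R -> R) : R -> R -> R :=
  fun x y => Derive (fun t => g t y) x.
Definition pd2 (g : R -> R -> R) : R -> R -> R :=
  fun x y => Derive (fun t => g x t) y.

Fixpoint Ck (k : nat) (g : R -> R -> R) : Prop :=
  match k with
  | O => forall z : R * R, continuous (fun z : R * R => g (fst z) (snd z)) z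
  | S k' =>
      (forall x y, ex_derive (fun t => g t y) x /\ ex_derive (fun t => g x t) y)
      /\ Ck k' g /\ Ck k' (pd1 g) /\ Ck k' (pd2 g)
  end.

Definition C3field (w : vec -> vec) : Prop :=
  Ck 3 (fun x y => fst (w (x, y))) /\ Ck 3 (fun x y => snd (w (x, y))).

Definition Dcurve (g : R -> vec) : vec :=
  (Derive (fun t => fst (g t)) 0, Derive (fun t => snd (g t)) 0).

Definition Dw (w : vec -> vec) (x h : vec) : vec :=
  Dcurve (fun t => w (vadd x (vscal t h))).
Definition D2w (w : vec -> vec) (x h k : vec) : vec :=
  Dcurve (fun s => Dw w (vadd x (vscal s k)) h).

Definition fcost (vbar : R) (w : vec -> vec) (x p : vec) : R :=
  let a := dot p (w x) in
  let d := vbar ^ 2 - dot (w x) (w x) in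
  (- a + sqrt (a ^ 2 + d * dot p p)) / d.

Definition D2f (vbar : R) (w : vec -> vec) (x p u u' v v' : vec) : R :=
  Derive (fun s =>
    Derive (fun t =>
      fcost vbar w (vadd x (vadd (vscal s u) (vscal t v)))
                   (vadd p (vadd (vscal s u') (vscal t v')))) 0) 0.

Definition ellipse (xO xD : vec) (a : R) (x : vec) : Prop :=
  vnorm (vsub x xO) + vnorm (vsub x xD) < 2 * a.

(* Main.v *)
Require Import Defs.
From Stdlib Require Import Reals Lra Psatz.
From Coquelicot Require Import Coquelicot.
Open Scope R_scope.

Lemma exdiff_cont f n x y : ex_diff_n f n x y -> continuity_2d_pt f x y.
Proof. destruct n; simpl; tauto. Qed.

Lemma Ck_diff : forall k g, Ck k g -> forall x y, ex_diff_n g k x y.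
Proof.
  induction k; intros g H x y.
  - simpl in H; simpl. split; [|exact I].
    apply continuity_2d_pt_filterlim. apply (H (x,y)).
  - destruct H as [Hd [H0 [H1 H2]]]. simpl. split.
    + exact (exdiff_cont _ _ _ _ (IHk g H0 x y)).
    + split; [apply Hd|]. split; [apply Hd|]. split.
      * exact (IHk _ H1 x y).
      * exact (IHk _ H2 x y).
Qed.

Lemma Ck2_differentiable g : Ck 2 g -> forall a b,
  differentiable_pt_lim g a b (pd1 g a b) (pd2 g a b).
Proof.
  intros H a b.
  assert (HL : locally_2d (fun u v => ex_diff_n g 2 u v) a b).
  { exists (mkposreal 1 Rlt_0_1). intros; apply Ck_diff; auto. }
  destruct (Taylor_Lagrange_2d g 1 a b HL) as [D HD].
  intros eps.
  destruct HD as [d1 Hd1].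
  assert (HD0 : 0 < Rmax D 1) by (apply Rlt_le_trans with 1; [lra|apply Rmax_r]).
  assert (Hd2 : 0 < Rmin d1 (eps / Rmax D 1)).
  { apply Rmin_pos; [apply cond_pos|]. apply Rdiv_lt_0_compat; [apply cond_pos|lra]. }
  exists (mkposreal _ Hd2). intros u v Hu Hv. simpl in Hu, Hv.
  assert (Hu1 : Rabs (u - a) < d1) by (eapply Rlt_le_trans; [exact Hu|apply Rmin_l]).
  assert (Hv1 : Rabs (v - b) < d1) by (eapply Rlt_le_trans; [exact Hv|apply Rmin_l]).
  specialize (Hd1 u v Hu1 Hv1).
  assert (EP : DL_pol 1 g a b (u - a) (v - b) = g a b + (pd1 g a b * (u - a) + pd2 g a b * (v - b))).
  { unfold DL_pol, differential, pd1, pd2, Binomial.C, partial_derive. simpl. field. }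
  rewrite EP in Hd1.
  set (M := Rmax (Rabs (u - a)) (Rabs (v - b))) in *.
  assert (HM0 : 0 <= M) by (unfold M; apply Rle_trans with (Rabs (u-a)); [apply Rabs_pos|apply Rmax_l]).
  assert (HM1 : M < eps / Rmax D 1).
  { unfold M; apply Rmax_lub_lt; eapply Rlt_le_trans; [exact Hu|apply Rmin_r|exact Hv|apply Rmin_r]. }
  assert (HM2 : Rmax D 1 * M <= eps).
  { apply Rmult_lt_compat_l with (r := Rmax D 1) in HM1; [|lra].
    field_simplify in HM1; lra. }
  replace (g u v - g a b - (pd1 g a b * (u - a) + pd2 g a b * (v - b)))
    with (g u v - (g a b + (pd1 g a b * (u - a) + pd2 g a b * (v - b)))) by ring.
  eapply Rle_trans; [exact Hd1|].
  simpl. rewrite Rmult_1_r.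
  assert (D <= Rmax D 1) by apply Rmax_l.
  assert (Rmax D 1 * M * M <= eps * M) by (apply Rmult_le_compat_r; lra).
  nra.
Qed.

Lemma dir_deriv g : Ck 2 g -> forall a b h1 h2 t0,
  is_derive (fun t => g (a + t*h1) (b + t*h2)) t0
    (pd1 g (a+t0*h1) (b+t0*h2) * h1 + pd2 g (a+t0*h1) (b+t0*h2) * h2).
Proof.
  intros H a b h1 h2 t0. apply is_derive_Reals.
  apply (derivable_pt_lim_comp_2d g (fun t => a + t*h1) (fun t => b + t*h2)).
  - apply Ck2_differentiable; auto.
  - apply is_derive_Reals. auto_derive; auto; ring.
  - apply is_derive_Reals. auto_derive; auto; ring.
Qed.

Definition gc1 (w : vec -> vec) : R -> R -> R := fun a b => fst (w (a, b)).
Definition gc2 (w : vec -> vec) : R -> R -> R := fun a b => snd (w (a, b)).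

Lemma w_line1 w y h t : fst (w (vadd y (vscal t h))) = gc1 w (fst y + t * fst h) (snd y + t * snd h).
Proof. reflexivity. Qed.
Lemma w_line2 w y h t : snd (w (vadd y (vscal t h))) = gc2 w (fst y + t * fst h) (snd y + t * snd h).
Proof. reflexivity. Qed.

Lemma Dw_eq w : C3field w -> forall y h,
  Dw w y h = (pd1 (gc1 w) (fst y) (snd y) * fst h + pd2 (gc1 w) (fst y) (snd y) * snd h,
              pd1 (gc2 w) (fst y) (snd y) * fst h + pd2 (gc2 w) (fst y) (snd y) * snd h).
Proof.
  intros [H1 H2] y h. unfold Dw, Dcurve.
  destruct H1 as [_ [H1 _]]. destruct H2 as [_ [H2 _]].
  f_equal; apply is_derive_unique.
  - pose proof (dir_deriv _ H1 (fst y) (snd y) (fst h) (snd h) 0) as D.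
    replace (fst y + 0 * fst h) with (fst y) in D by ring.
    replace (snd y + 0 * snd h) with (snd y) in D by ring. exact D.
  - pose proof (dir_deriv _ H2 (fst y) (snd y) (fst h) (snd h) 0) as D.
    replace (fst y + 0 * fst h) with (fst y) in D by ring.
    replace (snd y + 0 * snd h) with (snd y) in D by ring. exact D.
Qed.

Lemma R1a w : C3field w -> forall y h t0, ex_derive (fun t => fst (w (vadd y (vscal t h)))) t0.
Proof.
  intros [H1 _] y h t0. destruct H1 as [_ [H1 _]].
  eexists. apply (dir_deriv _ H1 (fst y) (snd y) (fst h) (snd h) t0).
Qed.
Lemma R1b w : C3field w -> forall y h t0, ex_derive (fun t => snd (w (vadd y (vscal t h)))) t0.
Proof.
  intros [_ H1] y h t0. destruct H1 as [_ [H1 _]].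
  eexists. apply (dir_deriv _ H1 (fst y) (snd y) (fst h) (snd h) t0).
Qed.

Lemma R2a w : C3field w -> forall y k h, ex_derive (fun s => fst (Dw w (vadd y (vscal s k)) h)) 0.
Proof.
  intros HC y k h. pose proof HC as [H1 _]. destruct H1 as [_ [_ [Hp1 Hp2]]].
  apply ex_derive_ext with (fun s => pd1 (gc1 w) (fst y + s * fst k) (snd y + s * snd k) * fst h
     + pd2 (gc1 w) (fst y + s * fst k) (snd y + s * snd k) * snd h).
  { intros s. rewrite Dw_eq; auto. }
  set (F1 := fun s => pd1 (gc1 w) (fst y + s * fst k) (snd y + s * snd k)).
  set (F2 := fun s => pd2 (gc1 w) (fst y + s * fst k) (snd y + s * snd k)).
  change (ex_derive (fun s => F1 s * fst h + F2 s * snd h) 0).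
  assert (E1 : ex_derive F1 0) by (eexists; apply (dir_deriv _ Hp1)).
  assert (E2 : ex_derive F2 0) by (eexists; apply (dir_deriv _ Hp2)).
  eexists. auto_derive; auto.
Qed.
Lemma R2b w : C3field w -> forall y k h, ex_derive (fun s => snd (Dw w (vadd y (vscal s k)) h)) 0.
Proof.
  intros HC y k h. pose proof HC as [_ H1]. destruct H1 as [_ [_ [Hp1 Hp2]]].
  apply ex_derive_ext with (fun s => pd1 (gc2 w) (fst y + s * fst k) (snd y + s * snd k) * fst h
     + pd2 (gc2 w) (fst y + s * fst k) (snd y + s * snd k) * snd h).
  { intros s. rewrite Dw_eq; auto. }
  set (F1 := fun s => pd1 (gc2 w) (fst y + s * fst k) (snd y + s * snd k)).
  set (F2 := fun s => pd2 (gc2 w) (fst y + s * fst k) (snd y + s * snd k)).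
  change (ex_derive (fun s => F1 s * fst h + F2 s * snd h) 0).
  assert (E1 : ex_derive F1 0) by (eexists; apply (dir_deriv _ Hp1)).
  assert (E2 : ex_derive F2 0) by (eexists; apply (dir_deriv _ Hp2)).
  eexists. auto_derive; auto.
Qed.

Definition fc (V : R) (W q : vec) : R :=
  let a := dot q W in
  let d := V ^ 2 - dot W W in
  (- a + sqrt (a ^ 2 + d * dot q q)) / d.

Lemma fcost_fc V w y q : fcost V w y q = fc V (w y) q.
Proof. reflexivity. Qed.

Lemma dot_pos_nz q : q <> (0,0) -> 0 < dot q q.
Proof.
  destruct q as [q1 q2]; unfold dot; simpl; intros H.
  destruct (Req_dec q1 0); destruct (Req_dec q2 0); subst; [congruence| nra..].
Qed.

Lemma fc_pos V W q : dot W W < V^2 -> q <> (0,0) -> 0 < fc V W q.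
Proof.
  intros HW Hq. pose proof (dot_pos_nz q Hq). unfold fc.
  set (a := dot q W). set (d := V^2 - dot W W).
  assert (Hd : 0 < d) by (unfold d; lra).
  assert (Hs : Rabs a < sqrt (a^2 + d * dot q q)).
  { rewrite <- sqrt_Rsqr_abs. apply sqrt_lt_1; [apply Rle_0_sqr| |].
    - nra.
    - unfold Rsqr; nra. }
  apply Rdiv_lt_0_compat; auto. pose proof (Rle_abs a). lra.
Qed.

Lemma fc_id V W q : dot W W < V^2 ->
  let T := fc V W q in dot (vsub q (vscal T W)) (vsub q (vscal T W)) = V^2 * T^2.
Proof.
  intros HW T. unfold T, fc.
  set (a := dot q W). set (d := V^2 - dot W W).
  assert (Hd : 0 < d) by (unfold d; lra).
  assert (Hpos : 0 <= a^2 + d * dot q q).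
  { assert (0 <= dot q q) by (unfold dot; nra). nra. }
  pose proof (sqrt_sqrt _ Hpos) as Hsq.
  set (r := sqrt (a ^ 2 + d * dot q q)) in *.
  destruct q as [q1 q2]; destruct W as [W1 W2].
  unfold a, d, dot, vsub, vscal in *; simpl in *.
  apply Rminus_diag_uniq.
  field_simplify; [|lra].
  assert (Hr2 : r^2 = (q1 * W1 + q2 * W2) * ((q1 * W1 + q2 * W2) * 1) +
    (V * (V * 1) - (W1 * W1 + W2 * W2)) * (q1 * q1 + q2 * q2)) by (rewrite <- Hsq; ring).
  rewrite Hr2. unfold Rdiv. apply Rmult_eq_0_compat_r. ring.
Qed.

Lemma D_pos V W E T : 0 < V -> dot W W < V^2 -> 0 < T -> dot E E = V^2 * T^2 ->
  0 < dot E W + V^2 * T.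
Proof.
  destruct W as [W1 W2]; destruct E as [E1 E2]; unfold dot; simpl. intros HV HW HT HE.
  assert (CS : (E1*W1 + E2*W2)^2 <= (E1*E1+E2*E2)*(W1*W1+W2*W2)).
  { assert (0 <= (E1*W2 - E2*W1)^2) by apply pow2_ge_0. nra. }
  rewrite HE in CS.
  destruct (Rlt_or_le 0 (E1 * W1 + E2 * W2 + V ^ 2 * T)) as [h|h]; auto.
  exfalso.
  assert (h2 : V^2 * T <= - (E1 * W1 + E2 * W2)) by lra.
  assert (h3 : (V^2*T)^2 <= (E1 * W1 + E2 * W2)^2).
  { assert (0 <= V^2 * T) by (apply Rmult_le_pos; [apply pow2_ge_0|lra]). nra. }
  assert (0 < V^2 * T^2) by (apply Rmult_lt_0_compat; apply pow_lt; lra).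
  nra.
Qed.

Definition Tform V (W B q h' : vec) (T : R) :=
  dot (vsub q (vscal T W)) (vsub h' (vscal T B)) / (dot (vsub q (vscal T W)) W + V^2 * T).

Lemma vadd0 (y h : vec) : vadd y (vscal 0 h) = y.
Proof. destruct y; unfold vadd, vscal; simpl; f_equal; ring. Qed.

Lemma FO V w : 0 < V -> C3field w -> (forall x, dot (w x) (w x) < V^2) ->
  forall y h q h', q <> (0,0) ->
  is_derive (fun t => fcost V w (vadd y (vscal t h)) (vadd q (vscal t h'))) 0
    (Tform V (w y) (Dw w y h) q h' (fcost V w y q)).
Proof.
  intros HV HC HW y h q h' Hq.
  set (w1 := fun t => fst (w (vadd y (vscal t h)))).
  set (w2 := fun t => snd (w (vadd y (vscal t h)))).
  set (phi := fun t => fcost V w (vadd y (vscal t h)) (vadd q (vscal t h'))).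
  assert (Ew1 : ex_derive w1 0) by apply (R1a w HC).
  assert (Ew2 : ex_derive w2 0) by apply (R1b w HC).
  assert (Hphi : forall t, phi t =
    (- ((fst q + t * fst h') * w1 t + (snd q + t * snd h') * w2 t) +
     sqrt (((fst q + t * fst h') * w1 t + (snd q + t * snd h') * w2 t) ^ 2 +
           (V^2 - (w1 t * w1 t + w2 t * w2 t)) *
           ((fst q + t * fst h') * (fst q + t * fst h') + (snd q + t * snd h') * (snd q + t * snd h'))))
    / (V^2 - (w1 t * w1 t + w2 t * w2 t))).
  { intros t. reflexivity. }
  assert (Hy0 : vadd y (vscal 0 h) = y) by apply vadd0.
  assert (W0a : w1 0 = fst (w y)) by (unfold w1; rewrite Hy0; reflexivity).
  assert (W0b : w2 0 = snd (w y)) by (unfold w2; rewrite Hy0; reflexivity).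
  assert (Hd0 : 0 < V^2 - (w1 0 * w1 0 + w2 0 * w2 0)).
  { rewrite W0a, W0b. specialize (HW y). unfold dot in HW. lra. }
  assert (Hq2 := dot_pos_nz q Hq). unfold dot in Hq2.
  assert (Ephi : ex_derive phi 0).
  { apply ex_derive_ext with (1 := fun t => eq_sym (Hphi t)).
    auto_derive. repeat split; auto; try lra.
    replace (fst q + 0 * fst h') with (fst q) by ring.
    replace (snd q + 0 * snd h') with (snd q) by ring.
    assert (0 <= (fst q * w1 0 + snd q * w2 0) ^ 2) by apply pow2_ge_0. nra. }
  set (F := fun t =>
    (fst q + t * fst h' - phi t * w1 t) * (fst q + t * fst h' - phi t * w1 t) +
    (snd q + t * snd h' - phi t * w2 t) * (snd q + t * snd h' - phi t * w2 t) - V^2 * phi t ^ 2).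
  assert (HF : forall t, F t = 0).
  { intros t. pose proof (fc_id V (w (vadd y (vscal t h))) (vadd q (vscal t h')) (HW _)) as E.
    simpl in E.
    change (fc V (w (vadd y (vscal t h))) (vadd q (vscal t h'))) with (phi t) in E.
    transitivity (dot (vsub (vadd q (vscal t h')) (vscal (phi t) (w (vadd y (vscal t h)))))
       (vsub (vadd q (vscal t h')) (vscal (phi t) (w (vadd y (vscal t h))))) - V^2 * phi t ^2).
    - reflexivity.
    - rewrite E; ring. }
  assert (HD1 : is_derive F 0 0).
  { apply is_derive_ext with (fun _ => 0). { intros t; rewrite HF; reflexivity. }
    auto_derive; auto. }
  set (T0 := phi 0). set (p' := Derive phi 0). set (a1 := Derive w1 0). set (a2 := Derive w2 0).
  set (L := 2 * (fst q + 0 * fst h' - T0 * w1 0) * (fst h' - (p' * w1 0 + T0 * a1))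
          + 2 * (snd q + 0 * snd h' - T0 * w2 0) * (snd h' - (p' * w2 0 + T0 * a2))
          - V^2 * (2 * T0 * p')).
  assert (HD2 : is_derive F 0 L).
  { unfold F. auto_derive. { repeat split; auto. }
    unfold L, T0, p', a1, a2.
    change (fun x : R => phi x) with phi. change (fun x : R => w1 x) with w1.
    change (fun x : R => w2 x) with w2. ring. }
  assert (HL : L = 0).
  { rewrite <- (is_derive_unique _ _ _ HD2). apply (is_derive_unique _ _ _ HD1). }
  assert (HT0 : T0 = fcost V w y q).
  { unfold T0, phi. rewrite Hy0, vadd0. reflexivity. }
  assert (HT0p : 0 < T0).
  { rewrite HT0, fcost_fc. apply fc_pos; auto. }
  assert (HE : dot (vsub q (vscal T0 (w y))) (vsub q (vscal T0 (w y))) = V^2 * T0^2).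
  { rewrite HT0. apply fc_id; auto. }
  pose proof (D_pos V (w y) _ T0 HV (HW y) HT0p HE) as HDp.
  replace (Tform V (w y) (Dw w y h) q h' (fcost V w y q)) with p'.
  { apply Derive_correct; auto. }
  rewrite <- HT0. unfold Tform.
  change (Dw w y h) with (a1, a2).
  assert (Ewy : w y = (w1 0, w2 0)) by (rewrite W0a, W0b; destruct (w y); reflexivity).
  rewrite Ewy in HDp |- *.
  destruct q as [q1 q2]. destruct h' as [k1 k2].
  unfold dot, vsub, vscal in *; simpl in *.
  apply (Rmult_eq_reg_r (((q1 - T0 * w1 0) * w1 0 + (q2 - T0 * w2 0) * w2 0 + V ^ 2 * T0))); [|lra].
  unfold Rdiv. rewrite Rmult_assoc, Rinv_l; [|lra]. rewrite Rmult_1_r.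
  unfold L in HL. simpl in HL. lra.
Qed.

Lemma loc_nz (p u' : vec) : p <> (0,0) -> locally 0 (fun s => vadd p (vscal s u') <> (0,0)).
Proof.
  destruct p as [p1 p2]; destruct u' as [a1 a2]. intros Hp.
  set (m := Rabs p1 + Rabs p2). set (M := Rabs a1 + Rabs a2 + 1).
  assert (Hm : 0 < m).
  { unfold m. pose proof (Rabs_pos p1); pose proof (Rabs_pos p2).
    destruct (Req_dec p1 0) as [h1|h1].
    - destruct (Req_dec p2 0) as [h2|h2]. { subst; congruence. }
      pose proof (Rabs_pos_lt p2 h2); lra.
    - pose proof (Rabs_pos_lt p1 h1); lra. }
  assert (HM : 0 < M) by (unfold M; pose proof (Rabs_pos a1); pose proof (Rabs_pos a2); lra).
  exists (mkposreal (m / M) (Rdiv_lt_0_compat _ _ Hm HM)).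
  intros s Hs. change (Rabs (s - 0) < m / M) in Hs. rewrite Rminus_0_r in Hs.
  unfold vadd, vscal; simpl. intros He. injection He as E1 E2.
  assert (p1 = - (s * a1)) by lra. assert (p2 = - (s * a2)) by lra.
  assert (m = Rabs s * (Rabs a1 + Rabs a2)).
  { unfold m. subst p1 p2. rewrite !Rabs_Ropp, !Rabs_mult. ring. }
  assert (Rabs s * M < m).
  { apply Rmult_lt_compat_r with (r := M) in Hs; auto. unfold Rdiv in Hs.
    rewrite Rmult_assoc, Rinv_l in Hs; lra. }
  pose proof (Rabs_pos s). unfold M in *. nra.
Qed.

Definition Tst V (W A B C P u' v' : vec) (T : R) : R :=
  let E := vsub P (vscal T W) in
  let D := dot E W + V^2 * T in
  let Ts := dot E (vsub u' (vscal T A)) / D in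
  let Tt := dot E (vsub v' (vscal T B)) / D in
  let Es := vsub (vsub u' (vscal Ts W)) (vscal T A) in
  let Et := vsub (vsub v' (vscal Tt W)) (vscal T B) in
  (dot Es Et - V^2 * Ts * Tt - Tt * dot E A - Ts * dot E B - T * dot E C) / D.

Lemma vassoc (x a b : vec) : vadd x (vadd a b) = vadd (vadd x a) b.
Proof. unfold vadd; simpl; f_equal; ring. Qed.

Lemma SO V w : 0 < V -> C3field w -> (forall x, dot (w x) (w x) < V^2) ->
  forall x p u u' v v', p <> (0,0) ->
  D2f V w x p u u' v v' =
  Tst V (w x) (Dw w x u) (Dw w x v) (D2w w x v u) p u' v' (fcost V w x p).
Proof.
  intros HV HC HW x p u u' v v' Hp.
  unfold D2f.
  set (T := fun s => fcost V w (vadd x (vscal s u)) (vadd p (vscal s u'))).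
  set (w1 := fun s => fst (w (vadd x (vscal s u)))).
  set (w2 := fun s => snd (w (vadd x (vscal s u)))).
  set (b1 := fun s => fst (Dw w (vadd x (vscal s u)) v)).
  set (b2 := fun s => snd (Dw w (vadd x (vscal s u)) v)).
  set (G := fun s =>
    ((fst p + s * fst u' - T s * w1 s) * (fst v' - T s * b1 s) +
     (snd p + s * snd u' - T s * w2 s) * (snd v' - T s * b2 s)) /
    ((fst p + s * fst u' - T s * w1 s) * w1 s + (snd p + s * snd u' - T s * w2 s) * w2 s + V^2 * T s)).
  rewrite (Derive_ext_loc _ G).
  2:{ generalize (loc_nz p u' Hp). apply filter_imp. intros s Hs.
      rewrite (Derive_ext _ (fun t => fcost V w (vadd (vadd x (vscal s u)) (vscal t v))
                                          (vadd (vadd p (vscal s u')) (vscal t v')))).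
      2:{ intros t. rewrite !vassoc. reflexivity. }
      rewrite (is_derive_unique _ _ _ (FO V w HV HC HW _ v _ v' Hs)).
      reflexivity. }
  assert (Hy0 : vadd x (vscal 0 u) = x) by apply vadd0.
  assert (Hp0 : vadd p (vscal 0 u') = p) by apply vadd0.
  assert (HT : is_derive T 0 (Tform V (w x) (Dw w x u) p u' (fcost V w x p))) by (apply FO; auto).
  assert (ET : ex_derive T 0) by (eexists; exact HT).
  assert (HT' := is_derive_unique _ _ _ HT).
  assert (Ew1 : ex_derive w1 0) by apply (R1a w HC).
  assert (Ew2 : ex_derive w2 0) by apply (R1b w HC).
  assert (Eb1 : ex_derive b1 0) by apply (R2a w HC).
  assert (Eb2 : ex_derive b2 0) by apply (R2b w HC).
  assert (T0 : T 0 = fcost V w x p) by (unfold T; rewrite Hy0, Hp0; reflexivity).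
  assert (W10 : w1 0 = fst (w x)) by (unfold w1; rewrite Hy0; reflexivity).
  assert (W20 : w2 0 = snd (w x)) by (unfold w2; rewrite Hy0; reflexivity).
  assert (B10 : b1 0 = fst (Dw w x v)) by (unfold b1; rewrite Hy0; reflexivity).
  assert (B20 : b2 0 = snd (Dw w x v)) by (unfold b2; rewrite Hy0; reflexivity).
  assert (HTp : 0 < fcost V w x p) by (rewrite fcost_fc; apply fc_pos; auto).
  assert (HE : dot (vsub p (vscal (fcost V w x p) (w x))) (vsub p (vscal (fcost V w x p) (w x)))
               = V^2 * (fcost V w x p)^2) by (apply fc_id; auto).
  pose proof (D_pos V (w x) _ _ HV (HW x) HTp HE) as HDp.
  apply is_derive_unique. unfold G. auto_derive.
  { repeat split; auto. rewrite T0, W10, W20. 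
    destruct (w x) as [W1 W2]. destruct p as [p1 p2].
    unfold dot, vsub, vscal in HDp; simpl in HDp |- *. lra. }
  change (fun x => T x) with T. change (fun x => w1 x) with w1. change (fun x => w2 x) with w2.
  change (fun x => b1 x) with b1. change (fun x => b2 x) with b2.
  rewrite HT', T0, W10, W20, B10, B20.
  change (Derive w1 0) with (fst (Dw w x u)). change (Derive w2 0) with (snd (Dw w x u)).
  change (Derive b1 0) with (fst (D2w w x v u)). change (Derive b2 0) with (snd (D2w w x v u)).
  unfold Tst, Tform.
  set (T00 := fcost V w x p) in *.
  destruct (w x) as [W1 W2]. destruct p as [p1 p2]. destruct (Dw w x u) as [A1 A2].
  destruct (Dw w x v) as [B1 B2]. destruct (D2w w x v u) as [C1 C2].
  destruct u' as [a1 a2]. destruct v' as [e1 e2].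
  unfold dot, vsub, vscal in *; simpl in *.
  field. lra.
Qed.

Definition cross (a b : vec) : R := fst a * snd b - snd a * fst b.

Lemma dot_ge0 a : 0 <= dot a a.
Proof. unfold dot; nra. Qed.

Lemma vnorm_ge0 a : 0 <= vnorm a.
Proof. apply sqrt_pos. Qed.

Lemma vnorm_sq a : vnorm a * vnorm a = dot a a.
Proof. apply sqrt_sqrt, dot_ge0. Qed.

Lemma lagrange a b c : dot a b * dot a c + cross a b * cross a c = dot a a * dot b c.
Proof. unfold dot, cross; ring. Qed.

Lemma le_of_sq (a b : R) : 0 <= b -> a * a <= b * b -> Rabs a <= b.
Proof.
  intros Hb H. apply Rsqr_le_abs_0 in H. rewrite (Rabs_pos_eq b) in H; auto.
Qed.

Lemma cs a b : Rabs (dot a b) <= vnorm a * vnorm b.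
Proof.
  apply le_of_sq. { apply Rmult_le_pos; apply vnorm_ge0. }
  replace (vnorm a * vnorm b * (vnorm a * vnorm b)) with ((vnorm a * vnorm a) * (vnorm b * vnorm b)) by ring.
  rewrite !vnorm_sq. pose proof (lagrange a b b). 
  assert (0 <= cross a b * cross a b) by nra. unfold dot in *. nra.
Qed.

Lemma vnorm_scal t a : vnorm (vscal t a) = Rabs t * vnorm a.
Proof.
  unfold vnorm. rewrite <- sqrt_Rsqr_abs, <- sqrt_mult_alt.
  - f_equal. unfold dot, vscal, Rsqr; simpl; ring.
  - apply Rle_0_sqr.
Qed.

Lemma vnorm_sub a b : vnorm (vsub a b) <= vnorm a + vnorm b.
Proof.
  rewrite <- (Rabs_pos_eq (vnorm (vsub a b))) by apply vnorm_ge0.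
  apply le_of_sq. { pose proof (vnorm_ge0 a); pose proof (vnorm_ge0 b); lra. }
  pose proof (vnorm_sq a); pose proof (vnorm_sq b); pose proof (vnorm_sq (vsub a b)).
  pose proof (cs a b). pose proof (Rle_abs (- dot a b)). rewrite Rabs_Ropp in *.
  assert (dot (vsub a b) (vsub a b) = dot a a + dot b b - 2 * dot a b) by (unfold dot, vsub; simpl; ring).
  pose proof (vnorm_ge0 a); pose proof (vnorm_ge0 b). nra.
Qed.

Lemma vnorm_add a b : vnorm (vadd a b) <= vnorm a + vnorm b.
Proof.
  replace (vadd a b) with (vsub a (vscal (-1) b)).
  - eapply Rle_trans; [apply vnorm_sub|]. rewrite vnorm_scal. replace (Rabs (-1)) with 1 by (rewrite Rabs_left; lra). lra.
  - unfold vsub, vadd, vscal; simpl; f_equal; ring.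
Qed.

Lemma vnorm_sub_ge a b : vnorm a - vnorm b <= vnorm (vsub a b).
Proof.
  replace a with (vadd (vsub a b) b) at 1 by (unfold vadd, vsub; destruct a, b; simpl; f_equal; ring).
  pose proof (vnorm_add (vsub a b) b). lra.
Qed.

Lemma cross_bound V c T (E W g : vec) D Ts :
  0 < V -> 0 <= c -> c^2 < V^2 -> dot W W <= c^2 -> 0 < T ->
  dot E E = V^2 * T^2 -> D = dot E W + V^2 * T -> 0 < D -> Ts * D = dot E g ->
  Rabs (cross E (vsub g (vscal Ts W))) <= V / sqrt (V^2 - c^2) * (V * T) * vnorm g.
Proof.
  intros HV Hc HcV HW HT HE HD HDp HTs.
  set (al := cross E g). set (be := dot E g). set (om := cross E W). set (et := dot E W).
  assert (Hx : cross E (vsub g (vscal Ts W)) = al - Ts * om) by (unfold al, om, cross, vsub, vscal; simpl; ring).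
  rewrite Hx.
  assert (H1 : D * (al - Ts * om) = D * al - be * om) by (unfold be; rewrite <- HTs; ring).
  assert (H2 : (D * al - be * om)^2 + (D * be + al * om)^2 = (D^2 + om^2) * (al^2 + be^2)) by ring.
  assert (H3 : al^2 + be^2 = V^2 * T^2 * dot g g).
  { pose proof (lagrange E g g). unfold al, be. rewrite <- HE. nra. }
  assert (H4 : om^2 + et^2 = V^2 * T^2 * dot W W).
  { pose proof (lagrange E W W). unfold om, et. rewrite <- HE. nra. }
  set (vl2 := V^2 - c^2).
  assert (Hvl : 0 < vl2) by (unfold vl2; lra).
  assert (H5 : vl2 * om^2 <= c^2 * D^2).
  { assert (om^2 <= V^2 * T^2 * c^2 - et^2).
    { assert (0 <= V^2 * T^2) by (apply Rmult_le_pos; apply pow2_ge_0). nra. }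
    assert (c^2 * D^2 - vl2 * (V^2 * T^2 * c^2 - et^2) = V^2 * (et + c^2 * T)^2)
      by (unfold vl2; rewrite HD; unfold et; ring).
    assert (0 <= V^2 * (et + c^2 * T)^2) by (apply Rmult_le_pos; apply pow2_ge_0).
    nra. }
  assert (Hg := dot_ge0 g).
  assert (H6 : vl2 * (D^2 * (al - Ts * om)^2) <= V^2 * D^2 * (V^2 * T^2 * dot g g)).
  { replace (D^2 * (al - Ts * om)^2) with ((D * al - be * om)^2) by (rewrite <- H1; ring).
    assert (0 <= (D * be + al * om)^2) by apply pow2_ge_0.
    assert (0 <= al^2 + be^2) by nra.
    assert (vl2 * (D^2 + om^2) <= V^2 * D^2) by (unfold vl2 in *; nra).
    nra. }
  assert (H7 : vl2 * (al - Ts * om)^2 <= V^2 * (V^2 * T^2 * dot g g)).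
  { assert (0 < D^2) by (apply pow_lt; lra). 
    apply (Rmult_le_reg_l (D^2)); auto. nra. }
  pose proof (sqrt_lt_R0 _ Hvl) as Hs. pose proof (sqrt_sqrt _ (Rlt_le _ _ Hvl)) as Hss.
  fold vl2. set (s := sqrt vl2) in *.
  apply le_of_sq.
  { apply Rmult_le_pos; [|apply vnorm_ge0]. apply Rmult_le_pos; [|nra].
    apply Rlt_le, Rdiv_lt_0_compat; auto. }
  rewrite <- (vnorm_sq g) in H7.
  replace (V / s * (V * T) * vnorm g * (V / s * (V * T) * vnorm g))
    with (V^2 * (V^2 * T^2 * (vnorm g * vnorm g)) / (s * s)) by (field; lra).
  rewrite Hss. apply (Rmult_le_reg_l vl2); auto.
  replace (vl2 * (V ^ 2 * (V ^ 2 * T ^ 2 * (vnorm g * vnorm g)) / vl2))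
    with (V ^ 2 * (V ^ 2 * T ^ 2 * (vnorm g * vnorm g))) by (field; lra).
  nra.
Qed.

Lemma BND V c c1 c2 (W A B C P u u' v v' : vec) T :
  0 < V -> 0 <= c -> 5 * c^2 <= V^2 -> dot W W <= c^2 -> 0 < T ->
  dot (vsub P (vscal T W)) (vsub P (vscal T W)) = V^2 * T^2 ->
  vnorm A <= c1 * vnorm u -> vnorm B <= c1 * vnorm v -> vnorm C <= c2 * vnorm v * vnorm u ->
  0 <= c1 -> 0 <= c2 ->
  let k := V - c in
  let Q := (V / sqrt (V^2 - c^2))^2 in
  let x := vnorm u in let y := vnorm v in let x' := vnorm u' in let y' := vnorm v' in
  Rabs (Tst V W A B C P u' v' T) <=
    Q / (V * T * k) * ((x' + T * c1 * x) * (y' + T * c1 * y))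
    + c1 / k^2 * (x * (y' + T * c1 * y) + y * (x' + T * c1 * x))
    + T * c2 * x * y / k.
Proof.
  intros HV Hc H5 HW HT HE HA HB HC Hc1 Hc2 k Q x y x' y'.
  unfold Tst.
  set (E := vsub P (vscal T W)) in *.
  set (D := dot E W + V^2 * T).
  set (gs := vsub u' (vscal T A)). set (gt := vsub v' (vscal T B)).
  set (Ts := dot E gs / D). set (Tt := dot E gt / D).
  assert (Hk : 0 < k) by (unfold k; nra).
  assert (HcV : c^2 < V^2) by nra.
  assert (HnE : vnorm E = V * T).
  { unfold vnorm. rewrite HE. replace (V^2 * T^2) with ((V*T)^2) by ring.
    apply sqrt_pow2. nra. }
  assert (HnW : vnorm W <= c).
  { unfold vnorm. rewrite <- (sqrt_pow2 c Hc). apply sqrt_le_1; [apply dot_ge0|apply pow2_ge_0|exact HW]. }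
  assert (HDk : V * T * k <= D).
  { unfold D, k. pose proof (cs E W) as Hcs. rewrite HnE in Hcs.
    apply Rabs_le_between in Hcs. destruct Hcs as [h1 h2].
    assert (V * T * vnorm W <= V * T * c) by (apply Rmult_le_compat_l; nra). nra. }
  assert (HDp : 0 < D) by (eapply Rlt_le_trans; [|exact HDk]; apply Rmult_lt_0_compat; nra).
  assert (HTsD : Ts * D = dot E gs) by (unfold Ts; field; lra).
  assert (HTtD : Tt * D = dot E gt) by (unfold Tt; field; lra).
  assert (Es_eq : vsub (vsub u' (vscal Ts W)) (vscal T A) = vsub gs (vscal Ts W))
    by (unfold gs, vsub, vscal; simpl; f_equal; ring).
  assert (Et_eq : vsub (vsub v' (vscal Tt W)) (vscal T B) = vsub gt (vscal Tt W))
    by (unfold gt, vsub, vscal; simpl; f_equal; ring).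
  rewrite Es_eq, Et_eq.
  set (Es := vsub gs (vscal Ts W)). set (Et := vsub gt (vscal Tt W)).
  assert (Hgs : vnorm gs <= x' + T * c1 * x).
  { unfold gs. eapply Rle_trans; [apply vnorm_sub|]. rewrite vnorm_scal, Rabs_pos_eq by lra.
    unfold x'. assert (T * vnorm A <= T * (c1 * vnorm u)) by (apply Rmult_le_compat_l; lra).
    unfold x; lra. }
  assert (Hgt : vnorm gt <= y' + T * c1 * y).
  { unfold gt. eapply Rle_trans; [apply vnorm_sub|]. rewrite vnorm_scal, Rabs_pos_eq by lra.
    unfold y'. assert (T * vnorm B <= T * (c1 * vnorm v)) by (apply Rmult_le_compat_l; lra).
    unfold y; lra. }
  assert (HEEs : dot E Es = V^2 * T * Ts).
  { transitivity (dot E gs - Ts * dot E W). { unfold Es, dot, vsub, vscal; simpl; ring. }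
    rewrite <- HTsD. unfold D. ring. }
  assert (HEEt : dot E Et = V^2 * T * Tt).
  { transitivity (dot E gt - Tt * dot E W). { unfold Et, dot, vsub, vscal; simpl; ring. }
    rewrite <- HTtD. unfold D. ring. }
  assert (HN1 : (dot Es Et - V^2 * Ts * Tt) * (V^2 * T^2) = cross E Es * cross E Et).
  { pose proof (lagrange E Es Et) as L. rewrite HEEs, HEEt, HE in L. nra. }
  pose proof (cross_bound V c T E W gs D Ts HV Hc HcV HW HT HE eq_refl HDp HTsD) as Hcs.
  pose proof (cross_bound V c T E W gt D Tt HV Hc HcV HW HT HE eq_refl HDp HTtD) as Hct.
  fold Es in Hcs. fold Et in Hct.
  set (R0 := V / sqrt (V^2 - c^2)) in *.
  assert (HR0 : 0 <= R0).
  { unfold R0. apply Rlt_le, Rdiv_lt_0_compat; auto. apply sqrt_lt_R0. lra. }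
  assert (Hngs := vnorm_ge0 gs). assert (Hngt := vnorm_ge0 gt).
  assert (Hx := vnorm_ge0 u). assert (Hy := vnorm_ge0 v).
  assert (Hx' := vnorm_ge0 u'). assert (Hy' := vnorm_ge0 v').
  fold x y x' y' in Hx, Hy, Hx', Hy'.
  assert (HVT : 0 < V * T) by nra.
  assert (HN1b : Rabs (dot Es Et - V^2 * Ts * Tt) <= Q * vnorm gs * vnorm gt).
  { apply (Rmult_le_reg_r (V^2 * T^2)). { apply Rmult_lt_0_compat; apply pow_lt; lra. }
    rewrite <- (Rabs_pos_eq (V^2 * T^2)) at 1 by (apply Rmult_le_pos; apply pow2_ge_0).
    rewrite <- Rabs_mult, HN1, Rabs_mult.
    pose proof (Rabs_pos (cross E Es)). pose proof (Rabs_pos (cross E Et)).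
    unfold Q. 
    assert (Rabs (cross E Es) * Rabs (cross E Et) <= (R0 * (V*T) * vnorm gs) * (R0 * (V*T) * vnorm gt)).
    { apply Rmult_le_compat; auto. }
    nra. }
  assert (HVTk : V * T * k <= D) by exact HDk.
  assert (HTsb : Rabs Ts <= vnorm gs / k).
  { apply (Rmult_le_reg_r D); auto.
    rewrite <- (Rabs_pos_eq D) at 1 by lra. rewrite <- Rabs_mult, HTsD.
    eapply Rle_trans; [apply cs|]. rewrite HnE.
    apply Rle_trans with (D / k * vnorm gs).
    - apply Rmult_le_compat_r; auto. apply (Rmult_le_reg_r k); auto. field_simplify; lra.
    - right; field; lra. }
  assert (HTtb : Rabs Tt <= vnorm gt / k).
  { apply (Rmult_le_reg_r D); auto.
    rewrite <- (Rabs_pos_eq D) at 1 by lra. rewrite <- Rabs_mult, HTtD.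
    eapply Rle_trans; [apply cs|]. rewrite HnE.
    apply Rle_trans with (D / k * vnorm gt).
    - apply Rmult_le_compat_r; auto. apply (Rmult_le_reg_r k); auto. field_simplify; lra.
    - right; field; lra. }
  assert (HEA : Rabs (dot E A) <= V * T * (c1 * x)).
  { eapply Rle_trans; [apply cs|]. rewrite HnE. apply Rmult_le_compat_l; [nra|unfold x, y in *; lra]. }
  assert (HEB : Rabs (dot E B) <= V * T * (c1 * y)).
  { eapply Rle_trans; [apply cs|]. rewrite HnE. apply Rmult_le_compat_l; [nra|unfold x, y in *; lra]. }
  assert (HEC : Rabs (dot E C) <= V * T * (c2 * y * x)).
  { eapply Rle_trans; [apply cs|]. rewrite HnE. apply Rmult_le_compat_l; [nra|unfold x, y in *; lra]. }
  set (M1 := (x' + T * c1 * x) * (y' + T * c1 * y)).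
  assert (HQ : 0 <= Q) by (unfold Q; apply pow2_ge_0).
  assert (t1 : Q * vnorm gs * vnorm gt <= Q / (V * T * k) * M1 * D).
  { assert (vnorm gs * vnorm gt <= M1) by (unfold M1; apply Rmult_le_compat; auto).
    assert (0 <= M1) by nra.
    apply Rle_trans with (Q * M1). { rewrite Rmult_assoc. apply Rmult_le_compat_l; auto. }
    apply Rle_trans with (Q / (V * T * k) * M1 * (V * T * k)).
    - right. field. split; lra.
    - apply Rmult_le_compat_l; auto. apply Rmult_le_pos; auto.
      apply Rdiv_le_0_compat; auto. nra. }
  assert (t2 : vnorm gt / k * (V * T * (c1 * x)) <= c1 / k^2 * (x * (y' + T * c1 * y)) * D).
  { apply Rle_trans with (c1 / k^2 * (x * vnorm gt) * (V * T * k)).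
    - right. field. lra.
    - apply Rmult_le_compat; try nra.
      + apply Rmult_le_pos; [apply Rdiv_le_0_compat; [lra|apply pow_lt; lra]|nra].
      + apply Rmult_le_compat_l. { apply Rdiv_le_0_compat; [lra|apply pow_lt; lra]. }
        apply Rmult_le_compat_l; lra. }
  assert (t3 : vnorm gs / k * (V * T * (c1 * y)) <= c1 / k^2 * (y * (x' + T * c1 * x)) * D).
  { apply Rle_trans with (c1 / k^2 * (y * vnorm gs) * (V * T * k)).
    - right. field. lra.
    - apply Rmult_le_compat; try nra.
      + apply Rmult_le_pos; [apply Rdiv_le_0_compat; [lra|apply pow_lt; lra]|nra].
      + apply Rmult_le_compat_l. { apply Rdiv_le_0_compat; [lra|apply pow_lt; lra]. }
        apply Rmult_le_compat_l; lra. }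
  assert (t4 : T * (V * T * (c2 * y * x)) <= T * c2 * x * y / k * D).
  { apply Rle_trans with (T * c2 * x * y / k * (V * T * k)).
    - right. field. lra.
    - apply Rmult_le_compat_l; auto.
      apply Rdiv_le_0_compat; auto. repeat apply Rmult_le_pos; lra. }
  set (num := dot Es Et - V ^ 2 * Ts * Tt - Tt * dot E A - Ts * dot E B - T * dot E C).
  assert (Hnum : Rabs num <= (Q / (V * T * k) * M1 + c1 / k ^ 2 * (x * (y' + T * c1 * y) + y * (x' + T * c1 * x))
     + T * c2 * x * y / k) * D).
  { unfold num.
    pose proof (Rabs_triang (dot Es Et - V ^ 2 * Ts * Tt - Tt * dot E A - Ts * dot E B) (- (T * dot E C))).
    pose proof (Rabs_triang (dot Es Et - V ^ 2 * Ts * Tt - Tt * dot E A) (- (Ts * dot E B))).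
    pose proof (Rabs_triang (dot Es Et - V ^ 2 * Ts * Tt) (- (Tt * dot E A))).
    rewrite !Rabs_Ropp, !Rabs_mult in *. rewrite (Rabs_pos_eq T) in * by lra.
    assert (Rabs Tt * Rabs (dot E A) <= vnorm gt / k * (V * T * (c1 * x)))
      by (apply Rmult_le_compat; auto using Rabs_pos).
    assert (Rabs Ts * Rabs (dot E B) <= vnorm gs / k * (V * T * (c1 * y)))
      by (apply Rmult_le_compat; auto using Rabs_pos).
    assert (T * Rabs (dot E C) <= T * (V * T * (c2 * y * x))) by (apply Rmult_le_compat_l; lra).
    unfold Rminus in *. nra. }
  unfold Rdiv at 1. rewrite Rabs_mult, Rabs_inv, (Rabs_pos_eq D) by lra.
  apply (Rmult_le_reg_r D); auto. rewrite Rmult_assoc, Rinv_l, Rmult_1_r by lra.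
  exact Hnum.
Qed.

Lemma div_le a b c d : 0 < b -> 0 < d -> a * d <= c * b -> a / b <= c / d.
Proof.
  intros Hb Hd H. unfold Rdiv.
  apply Rmult_le_reg_r with (b * d); [nra|].
  replace (a * / b * (b * d)) with (a * d) by (field; lra).
  replace (c * / d * (b * d)) with (c * b) by (field; lra). exact H.
Qed.

Lemma scal_facts V c vl : 0 < V -> 0 <= c -> 5 * c^2 <= V^2 -> 0 < vl -> vl * vl = V^2 - c^2 ->
  let k := V - c in
  0 < k /\ V * (V + c) <= 4 * vl * k /\ V * k + vl * vl <= 7 * k^2 /\
  V * vl * k + 2 * vl^3 <= 14 * k^3 /\ vl * vl <= 4 * k^2.
Proof.
  intros HV Hc H5 Hvl Hvl2 k.
  assert (Hc45 : c <= 0.45 * V) by nra.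
  assert (Hk : 0.55 * V <= k) by (unfold k; lra).
  assert (Hkp : 0 < k) by lra.
  assert (Hvk : vl * vl = k * (V + c)) by (unfold k; rewrite Hvl2; ring).
  assert (Hvl89 : 0.89 * V <= vl) by nra.
  assert (Hvl16 : vl <= 1.625 * k) by nra.
  assert (HV18 : V <= 1.82 * k) by lra.
  split; [exact Hkp|]. split; [nra|]. split; [nra|]. split.
  - assert (V * vl * k <= (1.82 * k) * (1.625 * k) * k).
    { apply Rmult_le_compat_r; [lra|]. apply Rmult_le_compat; lra. }
    assert (vl^3 <= (1.625 * k)^3).
    { apply pow_incr; lra. }
    nra.
  - nra.
Qed.

Lemma FIN V c vl T n c1 c2 x y x' y' :
  0 < V -> 0 <= c -> 5 * c^2 <= V^2 -> 0 < vl -> vl * vl = V^2 - c^2 ->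
  0 < T -> 0 < n -> T * (V - c) <= n -> n <= T * (V + c) ->
  0 <= c1 -> 0 <= c2 -> 0 <= x -> 0 <= y -> 0 <= x' -> 0 <= y' ->
  (V / vl)^2 / (V * T * (V - c)) * ((x' + T * c1 * x) * (y' + T * c1 * y))
  + c1 / (V - c)^2 * (x * (y' + T * c1 * y) + y * (x' + T * c1 * x))
  + T * c2 * x * y / (V - c)
  <= (14 * c1^2 / vl^3 + 4 * c2 / vl^2) * n * x * y
     + 7 * c1 / vl^2 * (x * y' + x' * y) + 4 / vl / n * x' * y'.
Proof.
  intros HV Hc H5 Hvl Hvl2 HT Hn Hn1 Hn2 Hc1 Hc2 Hx Hy Hx' Hy'.
  destruct (scal_facts V c vl HV Hc H5 Hvl Hvl2) as [Hk [Fa [Fb [Fc Fd]]]].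
  set (k := V - c) in *.
  set (a1 := V / (vl^2 * T * k)).
  set (a2 := V * c1 / (vl^2 * k) + c1 / k^2).
  set (a3 := T * c1^2 * V / (vl^2 * k) + 2 * c1^2 * T / k^2 + T * c2 / k).
  assert (HL : (V / vl)^2 / (V * T * k) * ((x' + T * c1 * x) * (y' + T * c1 * y))
     + c1 / k^2 * (x * (y' + T * c1 * y) + y * (x' + T * c1 * x)) + T * c2 * x * y / k
     = a1 * (x' * y') + a2 * (x * y' + x' * y) + a3 * (x * y)).
  { unfold a1, a2, a3. field. repeat split; lra. }
  rewrite HL.
  assert (A1 : a1 <= 4 / vl / n).
  { unfold a1. replace (4 / vl / n) with (4 / (vl * n)) by (field; lra).
    apply div_le; [apply Rmult_lt_0_compat; [apply Rmult_lt_0_compat; [nra|lra]|lra]|nra|].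
    assert (V * n <= 4 * vl * T * k) by nra. nra. }
  assert (A2 : a2 <= 7 * c1 / vl^2).
  { unfold a2.
    replace (V * c1 / (vl ^ 2 * k) + c1 / k ^ 2) with (c1 * (V * k + vl * vl) / (vl^2 * k^2)) by (field; lra).
    replace (7 * c1 / vl^2) with (c1 * (7 * k^2) / (vl^2 * k^2)) by (field; lra).
    apply div_le; try (apply Rmult_lt_0_compat; apply pow_lt; lra).
    apply Rmult_le_compat_r; [apply Rmult_le_pos; apply pow2_ge_0|].
    apply Rmult_le_compat_l; lra. }
  assert (A3 : a3 <= (14 * c1^2 / vl^3 + 4 * c2 / vl^2) * n).
  { assert (HTk : T <= n / k) by (apply (Rmult_le_reg_r k); [lra|]; field_simplify; lra).
    apply Rle_trans with (n / k * (c1^2 * V / (vl^2 * k) + 2 * c1^2 / k^2 + c2 / k)).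
    { replace a3 with (T * (c1^2 * V / (vl^2 * k) + 2 * c1^2 / k^2 + c2 / k)) by (unfold a3; field; lra).
      apply Rmult_le_compat_r; auto.
      repeat apply Rplus_le_le_0_compat; apply Rdiv_le_0_compat; try nra;
        try (apply pow_lt; lra); apply Rmult_lt_0_compat; try lra; apply pow_lt; lra. }
    replace (n / k * (c1^2 * V / (vl^2 * k) + 2 * c1^2 / k^2 + c2 / k))
      with (n * (c1^2 * ((V * vl * k + 2 * vl^3) / (vl^3 * k^3)) + c2 * ((vl * vl) / (vl^2 * k^2))))
      by (field; lra).
    rewrite (Rmult_comm _ n). apply Rmult_le_compat_l; [lra|].
    apply Rplus_le_compat.
    - replace (14 * c1^2 / vl^3) with (c1^2 * ((14 * k^3) / (vl^3 * k^3))) by (field; lra).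
      apply Rmult_le_compat_l; [apply pow2_ge_0|].
      apply Rmult_le_compat_r; [|lra]. apply Rlt_le, Rinv_0_lt_compat.
      apply Rmult_lt_0_compat; apply pow_lt; lra.
    - replace (4 * c2 / vl^2) with (c2 * ((4 * k^2) / (vl^2 * k^2))) by (field; lra).
      apply Rmult_le_compat_l; [lra|].
      apply Rmult_le_compat_r; [|lra]. apply Rlt_le, Rinv_0_lt_compat.
      apply Rmult_lt_0_compat; apply pow_lt; lra. }
  assert (0 <= x' * y') by nra. assert (0 <= x * y' + x' * y) by nra. assert (0 <= x * y) by nra.
  assert (a1 * (x' * y') <= 4 / vl / n * (x' * y')) by (apply Rmult_le_compat_r; auto).
  assert (a2 * (x * y' + x' * y) <= 7 * c1 / vl^2 * (x * y' + x' * y)) by (apply Rmult_le_compat_r; auto).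
  assert (a3 * (x * y) <= (14 * c1^2 / vl^3 + 4 * c2 / vl^2) * n * (x * y)) by (apply Rmult_le_compat_r; auto).
  replace (4 / vl / n * x' * y') with (4 / vl / n * (x' * y')) by ring.
  replace ((14 * c1 ^ 2 / vl ^ 3 + 4 * c2 / vl ^ 2) * n * x * y)
    with ((14 * c1 ^ 2 / vl ^ 3 + 4 * c2 / vl ^ 2) * n * (x * y)) by ring.
  lra.
Qed.

Theorem lemma12 (vbar : R) (xO xD : vec) (w : vec -> vec) (a c0 c1 c2 : R) :
  0 < vbar ->
  xO <> xD ->
  C3field w ->
  (forall x, vnorm (w x) < vbar) ->
  vnorm (vsub xO xD) < 2 * a ->
  (forall x, ellipse xO xD a x -> vnorm (w x) <= c0) ->
  c0 <= vbar / sqrt 5 ->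
  (forall x h, ellipse xO xD a x -> vnorm (Dw w x h) <= c1 * vnorm h) ->
  (forall x h k, ellipse xO xD a x ->
     vnorm (D2w w x h k) <= c2 * vnorm h * vnorm k) ->
  let vl := sqrt (vbar ^ 2 - c0 ^ 2) in
  let beta0 := 14 * c1 ^ 2 / vl ^ 3 + 4 * c2 / vl ^ 2 in
  let beta1 := 7 * c1 / vl ^ 2 in
  let beta2 := 4 / vl in
  forall x p u u' v v' : vec,
    ellipse xO xD a x -> p <> (0, 0) ->
    Rabs (D2f vbar w x p u u' v v')
      <= beta0 * vnorm p * vnorm u * vnorm v
         + beta1 * (vnorm u * vnorm v' + vnorm u' * vnorm v)
         + beta2 / vnorm p * vnorm u' * vnorm v'.
Proof.
  intros HV _ HC Hwb _ Hc0 Hc05 Hc1 Hc2 vl beta0 beta1 beta2 x p u u' v v' Hx Hp.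
  assert (HW : forall y, dot (w y) (w y) < vbar^2).
  { intros y. rewrite <- vnorm_sq. pose proof (Hwb y). pose proof (vnorm_ge0 (w y)). nra. }
  rewrite (SO vbar w HV HC HW x p u u' v v' Hp).
  assert (Hc0p : 0 <= c0) by (eapply Rle_trans; [apply vnorm_ge0|apply (Hc0 x Hx)]).
  assert (H5 : 5 * c0^2 <= vbar^2).
  { assert (Hs : 0 < sqrt 5) by (apply sqrt_lt_R0; lra).
    pose proof (sqrt_sqrt 5 ltac:(lra)) as Hss.
    assert (c0 * sqrt 5 <= vbar).
    { apply (Rmult_le_compat_r (sqrt 5)) in Hc05; [|lra].
      unfold Rdiv in Hc05. rewrite Rmult_assoc, Rinv_l, Rmult_1_r in Hc05; lra. }
    assert (0 <= c0 * sqrt 5) by nra. nra. }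
  assert (Hn10 : vnorm (1, 0) = 1).
  { unfold vnorm, dot; simpl. replace (1 * 1 + 0 * 0) with 1 by ring. apply sqrt_1. }
  assert (Hc1p : 0 <= c1).
  { pose proof (Hc1 x (1,0) Hx). pose proof (vnorm_ge0 (Dw w x (1,0))). rewrite Hn10 in *. lra. }
  assert (Hc2p : 0 <= c2).
  { pose proof (Hc2 x (1,0) (1,0) Hx). pose proof (vnorm_ge0 (D2w w x (1,0) (1,0))). rewrite Hn10 in *. lra. }
  assert (HWc : dot (w x) (w x) <= c0^2).
  { rewrite <- vnorm_sq. pose proof (Hc0 x Hx). pose proof (vnorm_ge0 (w x)). nra. }
  set (T := fcost vbar w x p).
  assert (HT : 0 < T) by (unfold T; rewrite fcost_fc; apply fc_pos; auto).
  assert (HE : dot (vsub p (vscal T (w x))) (vsub p (vscal T (w x))) = vbar^2 * T^2)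
    by (unfold T; rewrite fcost_fc; apply fc_id; auto).
  eapply Rle_trans.
  { apply (BND vbar c0 c1 c2 (w x) (Dw w x u) (Dw w x v) (D2w w x v u) p u u' v v' T); auto. }
  assert (Hvl : 0 < vl) by (unfold vl; apply sqrt_lt_R0; nra).
  assert (Hvl2 : vl * vl = vbar^2 - c0^2) by (unfold vl; apply sqrt_sqrt; nra).
  assert (HnE : vnorm (vsub p (vscal T (w x))) = vbar * T).
  { unfold vnorm. rewrite HE. replace (vbar^2 * T^2) with ((vbar*T)^2) by ring.
    apply sqrt_pow2. nra. }
  assert (HnTW : vnorm (vscal T (w x)) <= T * c0).
  { rewrite vnorm_scal, Rabs_pos_eq by lra. apply Rmult_le_compat_l; [lra|]. apply Hc0; auto. }
  assert (Hn1 : T * (vbar - c0) <= vnorm p).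
  { pose proof (vnorm_sub p (vscal T (w x))). lra. }
  assert (Hn2 : vnorm p <= T * (vbar + c0)).
  { replace p with (vadd (vsub p (vscal T (w x))) (vscal T (w x))) at 1
      by (unfold vadd, vsub; destruct p; simpl; f_equal; ring).
    pose proof (vnorm_add (vsub p (vscal T (w x))) (vscal T (w x))). lra. }
  assert (Hnp : 0 < vnorm p).
  { unfold vnorm. apply sqrt_lt_R0. apply dot_pos_nz; auto. }
  apply (FIN vbar c0 vl T (vnorm p) c1 c2); auto using vnorm_ge0.
Qed.
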